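(* Let $\mathcal{A}$ be a unital algebra, $\tau:\mathcal{A}\to\mathbb{C}$ a unital linear functional and $\tau':\mathcal{A}\to\mathbb{C}$ a linear functional with $\tau'(1)=0$, and let $\mathcal{A}_1,\mathcal{A}_2$ be two unital subalgebras which are infinitesimally free with respect to $(\tau,\tau')$. Let $\mathcal{I}$ be an ideal of $\mathcal{A}$ with $\mathcal{I}\subset \ker(\tau)$, and set $\mathcal{I}_1=\mathcal{I}\cap \mathcal{A}_1$, $\mathcal{I}_2=\mathcal{I}\cap \mathcal{A}_2$. Then, whenever $a_n\in \mathcal{A}_{i_n},\ldots,a_1\in \mathcal{A}_{i_1}$, $v\in \mathcal{I}_h$, $b_1\in \mathcal{A}_{j_1},\ldots,b_m\in \mathcal{A}_{j_m}$ are such that any two consecutive indices in the list $i_n,\ldots,i_1,h,j_1,\ldots,j_m \in\{1,2\}$ are different and $\tau(a_n)=\cdots=\tau(a_1)=0=\tau(b_1)=\cdots=\tau(b_m)$, we have $$\tau'(a_n\cdots a_1vb_1\cdots b_m)=\tau(a_n\cdots a_1\,\tau'(v)\,b_1\cdots b_m).$$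
   Context: Infinitesimal freeness w.r.t. $(\tau,\tau')$: whenever $a_j\in\mathcal{A}_{i_j}$ ($1\le j\le n$) with consecutive indices different and $\tau(a_j)=0$ for all $j$, one has $\tau(a_1\cdots a_n)=0$ and $\tau'(a_1\cdots a_n)=\sum_{j=1}^n\tau(a_1\cdots a_{j-1}\tau'(a_j)a_{j+1}\cdots a_n)$. *)

(* Defs.v *)
(* Scalars: complex numbers C = R[i] for R : realType
   (any realType is the real line, so R[i] is the field of complex numbers). *)
From HB Require Import structures.
From mathcomp Require Import all_boot all_order all_algebra.
From mathcomp Require Import reals.
From mathcomp Require Export complex.
Set Implicit Arguments. Unset Strict Implicit. Unset Printing Implicit Defensive.
Import Order.TTheory GRing.Theory Num.Theory.
Local Open Scope ring_scope.

Section Defs.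
Variables (C : fieldType) (A : algType C).

Definition is_ideal (I : {pred A}) : Prop :=
  [/\ 0 \in I, {in I &, forall x y, x + y \in I}
    & forall a x, x \in I -> a * x \in I /\ x * a \in I].

Definition lprod (s : seq (bool * A)) : A := \prod_(p <- s) p.2.

Definition alternating (s : seq bool) : bool := sorted (fun x y => x != y) s.

(* Infinitesimal freeness of the family Af (indexed by bool = {1,2})
   w.r.t. (tau, tau'): for every nonempty word a_1 ... a_n with a_j in Af i_j,
   consecutive indices different and tau(a_j) = 0, one has tau(a_1...a_n) = 0
   and tau'(a_1...a_n) = sum_j tau(a_1...a_{j-1} tau'(a_j) a_{j+1} ... a_n). *)
Definition inf_free (tau tau' : A -> C) (Af : bool -> {pred A}) : Prop :=
  forall s : seq (bool * A),
    s != [::] ->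
    alternating (map fst s) ->
    (forall p, p \in s -> p.2 \in Af p.1) ->
    (forall p, p \in s -> tau p.2 = 0) ->
    tau (lprod s) = 0 /\
    tau' (lprod s) =
      \sum_(j < size s)
        tau (lprod (take j s) * (tau' (nth (true, 0) s j).2)%:A
             * lprod (drop j.+1 s)).
End Defs.

(* Main.v *)
Require Import Defs.
From HB Require Import structures.
From mathcomp Require Import all_boot all_order all_algebra.
From mathcomp Require Import reals complex.
Import Order.TTheory GRing.Theory Num.Theory.
Local Open Scope ring_scope.

Theorem lemma2p5 (R : realType) (A : algType R[i])
  (tau tau' : A -> R[i])
  (tau_lin : forall (k : R[i]) (x y : A), tau (k *: x + y) = k * tau x + tau y)
  (tau'_lin : forall (k : R[i]) (x y : A), tau' (k *: x + y) = k * tau' x + tau' y)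
  (tau1 : tau 1 = 1) (tau'1 : tau' 1 = 0)
  (Af : bool -> {pred A})
  (Af_subalg : forall i, GRing.subalg_closed (Af i))
  (Af_free : inf_free tau tau' Af)
  (I : {pred A}) (I_ideal : is_ideal I)
  (I_ker : forall x, x \in I -> tau x = 0)
  (as_ bs : seq (bool * A)) (h : bool) (v : A) :
  alternating (map fst as_ ++ h :: map fst bs) ->
  (forall p, p \in as_ ++ bs -> p.2 \in Af p.1) ->
  (forall p, p \in as_ ++ bs -> tau p.2 = 0) ->
  v \in I -> v \in Af h ->
  tau' (lprod as_ * v * lprod bs) = tau (lprod as_ * (tau' v)%:A * lprod bs).
Proof.
case: I_ideal => _ _ Imul.
have lprod_in : forall (l : seq (bool * A)) e, e \in l -> e.2 \in I -> lprod l \in I.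
  elim=> [|x l IH] e //; rewrite in_cons => /orP[/eqP <-|el] eI;
    rewrite /lprod big_cons.
  - by case: (Imul (\prod_(p <- l) p.2) _ eI).
  - by case: (Imul x.2 _ (IH e el eI)).
move=> alt inAf cent vI vAh.
set s := as_ ++ (h, v) :: bs.
have Hlp : lprod as_ * v * lprod bs = lprod s.
  by rewrite /lprod big_cat big_cons /= mulrA.
have tv : tau v = 0 by apply: I_ker.
have ks : (size as_ < size s)%N by rewrite /s size_cat /= addnS ltnS leq_addr.
have nk : nth (true, 0) s (size as_) = (h, v) by rewrite /s nth_cat ltnn subnn.
rewrite Hlp.
have H1 : s != [::] by rewrite /s; case: (as_).
have H2 : alternating (map fst s) by rewrite /s map_cat.
have H3 : forall p, p \in s -> p.2 \in Af p.1.
  move=> p; rewrite /s mem_cat in_cons => /or3P[H|/eqP ->|H] //;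
    by apply: inAf; rewrite mem_cat H ?orbT.
have H4 : forall p, p \in s -> tau p.2 = 0.
  move=> p; rewrite /s mem_cat in_cons => /or3P[H|/eqP ->|H] //;
    by apply: cent; rewrite mem_cat H ?orbT.
have [_ ->] := Af_free s H1 H2 H3 H4.
rewrite (bigD1 (Ordinal ks)) //= big1 ?addr0.
    by rewrite nk /s take_size_cat // -cat_rcons drop_size_cat // size_rcons.
  move=> j /eqP neq; apply: I_ker.
  have neq' : (j : nat) <> size as_ by move=> E; apply: neq; apply: val_inj.
  case: (ltngtP j (size as_)) => [lt|gt|E]; last by [].
  + have hin : (h, v) \in drop j.+1 s.
      rewrite -nk -(subnKC lt) -nth_drop; apply: mem_nth.
      rewrite size_drop ltn_sub2r //; exact: leq_ltn_trans lt ks.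
    have Hd := lprod_in _ _ hin vI.
    set X := lprod (take j s) * _.
    have [J1 _] := Imul X _ Hd.
    exact: J1.
  + have hin : (h, v) \in take j s.
      rewrite -nk -(nth_take _ gt); apply: mem_nth.
      by rewrite size_take; case: ifP.
    have Hd := lprod_in _ _ hin vI.
    set c := (_ %:A).
    have [_ J1] := Imul c _ Hd.
    have [_ J2] := Imul (lprod (drop j.+1 s)) _ J1.
    exact: J2.
Qed.
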